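(* Assume (A1)–(A3), the latent index model (LI) below, and that $\Gamma^{Wald}$ is positive definite. Let $w^P$ be the MTE weight function of a policy that changes the propensity score distribution. Then there exists a unique $$\omega^{PRTE}=\arg\min_{\omega\in\mathcal S}\omega'\Gamma^{Wald}\omega,\qquad\text{where}\quad\mathcal S=\arg\min_{\omega\in\Delta^{L-1}}\int_0^1\bigl[\bar h(u;\omega)-w^P(u)\bigr]^2du.$$
   Context: Observe i.i.d. $(Y_i,D_i,\mathbf Z_i)$, $Y_i\in\mathbb R$, $D_i\in\{0,1\}$, $\mathbf Z_i=(Z_{1i},\dots,Z_{Li})'\in\{0,1\}^L$, $L\ge2$; potential outcomes $Y_i(0),Y_i(1)$, compliance type $D_i(\cdot):\{0,1\}^L\to\{0,1\}$, $D_i=D_i(\mathbf Z_i)$, $Y_i=D_iY_i(1)+(1-D_i)Y_i(0)$. $p_\ell=P(Z_{\ell i}=1)$, $\pi_\ell,\rho_\ell$ the differences of $\mathbb E[D_i\mid Z_{\ell i}=z]$, $\mathbb E[Y_i\mid Z_{\ell i}=z]$ between $z=1,0$, $\mathrm{Wald}_\ell=\rho_\ell/\pi_\ell$, $\gamma_\ell=\mathrm{Cov}(D_i,Z_{\ell i})$, $\Sigma_Z=\mathrm{Var}(\mathbf Z_i)$. $\Gamma^{Wald}_{\ell k}=\mathbb E[\tilde\epsilon_{i,\ell}\tilde\epsilon_{i,k}(Z_{\ell i}-p_\ell)(Z_{ki}-p_k)]/(\gamma_\ell\gamma_k)$, $\tilde\epsilon_{i,\ell}=Y_i-\mathrm{Wald}_\ell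 D_i-(\mathbb E[Y_i]-\mathrm{Wald}_\ell\mathbb E[D_i])$. $\Delta^{L-1}$ is the probability simplex in $\mathbb R^L$. (LI): $D_i=\mathbf 1\{V(\mathbf Z_i)\ge U_i\}$, $U_i\sim\mathrm{Uniform}(0,1)$ conditional on potential outcomes; $p(z)=V(z)=P(D_i=1\mid\mathbf Z_i=z)$; $h_\ell(u)=\dfrac{P(p(\mathbf Z_i)\ge u\mid Z_{\ell i}=1)-P(p(\mathbf Z_i)\ge u\mid Z_{\ell i}=0)}{\mathbb E[p(\mathbf Z_i)\mid Z_{\ell i}=1]-\mathbb E[p(\mathbf Z_i)\mid Z_{\ell i}=0]}$, $\bar h(u;\omega)=\sum_\ell\omega_\ell h_\ell(u)$. A policy moving the instrument distribution from $F_0$ to $F_1$ has weight $w^P(u)=(F_0(u)-F_1(u))/\int_0^1(F_0(s)-F_1(s))ds$, where $F_j(u)=P(p(\mathbf Z_i)\ge u\mid\text{policy }j)$ (denominator assumed nonzero). Assumptions: (A1) $(Y_i(0),Y_i(1),D_i(\cdot))$ independent of $\mathbf Z_i$. (A2) $D_i(z)$ nondecreasing in each coordinate for every $i$. (A3) $p_\ell>0$, $\pi_\ell>0$ for all $\ell$; $\Sigma_Z$ positive definite. *)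

(* Defs.v *)
From HB Require Import structures.
From mathcomp Require Import all_boot all_order all_algebra.
From mathcomp Require Import all_classical all_reals all_analysis.
Set Implicit Arguments. Unset Strict Implicit. Unset Printing Implicit Defensive.
Import Order.TTheory GRing.Theory Num.Theory.
Import numFieldNormedType.Exports.
Local Open Scope classical_set_scope.
Local Open Scope ring_scope.

Definition bvec (L : nat) := {ffun 'I_L -> bool}.
(* compliance types D_i(.) : {0,1}^L -> {0,1} *)
Definition ctype (L : nat) := {ffun bvec L -> bool}.

Section Model.
Context {R : realType} {d : measure_display} {T : measurableType d}
  (P : probability T R) {L : nat}.
Context (Z : T -> bvec L) (Dt : T -> ctype L) (Y0 Y1 : T -> R).

Definition Ex (X : T -> R) : R := fine ('E_P[X])%E.
Definition Pr (A : set T) : R := fine (P A).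
Definition Cov (X X' : T -> R) : R := fine (covariance P X X').
Definition condE (X : T -> R) (A : set T) : R :=
  Ex (fun w => X w * \1_A w) / Pr A.
Definition condPr (A B : set T) : R := Pr (A `&` B) / Pr B.

Definition Dobs (w : T) : R := (Dt w (Z w))%:R.
Definition Yobs (w : T) : R := Dobs w * Y1 w + (1 - Dobs w) * Y0 w.
Definition Zr (l : 'I_L) (w : T) : R := (Z w l)%:R.
Definition Zeq (l : 'I_L) (b : bool) : set T := [set w | Z w l = b].

Definition p_l (l : 'I_L) : R := Pr (Zeq l true).
Definition pi_l (l : 'I_L) : R := condE Dobs (Zeq l true) - condE Dobs (Zeq l false).
Definition rho_l (l : 'I_L) : R := condE Yobs (Zeq l true) - condE Yobs (Zeq l false).
Definition Wald (l : 'I_L) : R := rho_l l / pi_l l.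
Definition gamma_l (l : 'I_L) : R := Cov Dobs (Zr l).
Definition SigmaZ : 'M[R]_L := \matrix_(l, k) Cov (Zr l) (Zr k).

Definition eps_t (l : 'I_L) (w : T) : R :=
  Yobs w - Wald l * Dobs w - (Ex Yobs - Wald l * Ex Dobs).

Definition GammaWald : 'M[R]_L := \matrix_(l, k)
  (Ex (fun w => eps_t l w * eps_t k w * (Zr l w - p_l l) * (Zr k w - p_l k))
   / (gamma_l l * gamma_l k)).

(* MTE weights of the Wald estimands under (LI), with p(z) = V(z) *)
Definition h_l (V : bvec L -> R) (l : 'I_L) (u : R) : R :=
  (condPr [set w | u <= V (Z w)] (Zeq l true)
   - condPr [set w | u <= V (Z w)] (Zeq l false))
  / (condE (fun w => V (Z w)) (Zeq l true) - condE (fun w => V (Z w)) (Zeq l false)).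

Definition hbar (V : bvec L -> R) (om : 'cV[R]_L) (u : R) : R :=
  \sum_l om l 0 * h_l V l u.

End Model.

(* policy weights: F_j(u) = P(p(Z) >= u | policy j), where mu_j is the
   distribution of the propensity score under policy j *)
Definition Fpol {R : realType} (mu : probability (measurableTypeR R) R) (u : R) : R :=
  fine (mu `[u, +oo[%classic).

Definition wP {R : realType} (mu0 mu1 : probability (measurableTypeR R) R) (u : R) : R :=
  (Fpol mu0 u - Fpol mu1 u) /
  (\int[@lebesgue_measure R]_(s in `[0%R, 1%R]) (Fpol mu0 s - Fpol mu1 s)).

Definition simplex {R : realType} (L : nat) : set 'cV[R]_L :=
  [set om | (forall i, 0 <= om i 0) /\ \sum_i om i 0 = 1].

Definition quadform {R : realType} {L : nat} (M : 'M[R]_L) (om : 'cV[R]_L) : R :=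
  (om^T *m M *m om) 0 0.

Definition posdef {R : realType} {L : nat} (M : 'M[R]_L) : Prop :=
  forall x : 'cV[R]_L, x != 0 -> 0 < quadform M x.

Definition argmin_on {R : realType} {X : Type} (A : set X) (f : X -> \bar R) : set X :=
  [set x | A x /\ forall y, A y -> (f x <= f y)%E].

Definition fit_obj {R : realType} {L : nat} (hb : 'cV[R]_L -> R -> R) (w : R -> R)
  (om : 'cV[R]_L) : \bar R :=
  (\int[@lebesgue_measure R]_(u in `[0%R, 1%R]) ((hb om u - w u) ^+ 2)%:E)%E.

Section Assumptions.
Context {R : realType} {d : measure_display} {T : measurableType d}
  (P : probability T R) {L : nat}.
Context (Z : T -> bvec L) (Dt : T -> ctype L) (Y0 Y1 : T -> R).

Definition regular : Prop :=
  measurable_fun setT Y0 /\ measurable_fun setT Y1 /\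
  (forall z, measurable (Z @^-1` [set z])) /\
  (forall t, measurable (Dt @^-1` [set t])) /\
  P.-integrable setT (fun w => (Y0 w ^+ 2)%:E) /\
  P.-integrable setT (fun w => (Y1 w ^+ 2)%:E).

(* (A1): (Y(0), Y(1), D(.)) independent of Z (product rule on a generating
   pi-system of the joint sigma-algebra) *)
Definition A1 : Prop :=
  forall (A B : set R), measurable A -> measurable B ->
  forall (t : ctype L) (z : bvec L),
    P (Y0 @^-1` A `&` Y1 @^-1` B `&` Dt @^-1` [set t] `&` Z @^-1` [set z]) =
    (P (Y0 @^-1` A `&` Y1 @^-1` B `&` Dt @^-1` [set t]) * P (Z @^-1` [set z]))%E.

Definition A2 : Prop :=
  forall w (z z' : bvec L), (forall l, z l ==> z' l) -> Dt w z ==> Dt w z'.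

Definition A3 : Prop :=
  (forall l, 0 < p_l P Z l) /\ (forall l, 0 < pi_l P Z Dt l) /\ posdef (SigmaZ P Z).

(* (LI): D_i(z) = 1{V(z) >= U_i}, U_i ~ Uniform(0,1) conditional on the
   potential outcomes, and p(z) = V(z) in [0,1] *)
Definition LI (U : T -> R) (V : bvec L -> R) : Prop :=
  measurable_fun setT U /\
  (forall w z, Dt w z = (U w <= V z)) /\
  (forall (A B : set R), measurable A -> measurable B ->
   forall a b : R, 0 <= a -> a <= b -> b <= 1 ->
     P (Y0 @^-1` A `&` Y1 @^-1` B `&` U @^-1` `]a, b]%classic) =
     ((b - a)%:E * P (Y0 @^-1` A `&` Y1 @^-1` B))%E) /\
  (forall z, 0 <= V z <= 1).

End Assumptions.

Definition policy_ok {R : realType} (mu0 mu1 : probability (measurableTypeR R) R) : Prop :=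
  mu0 `[0%R, 1%R]%classic = 1%E /\ mu1 `[0%R, 1%R]%classic = 1%E /\
  (\int[@lebesgue_measure R]_(s in `[0%R, 1%R]) (Fpol mu0 s - Fpol mu1 s)) != 0.

(* Main.v *)
Require Import Defs.
From HB Require Import structures.
From mathcomp Require Import all_boot all_order all_algebra.
From mathcomp Require Import all_classical all_reals all_analysis.
From mathcomp Require Import measurable_realfun.
From mathcomp Require Import ring lra.
Import Order.TTheory GRing.Theory Num.Theory.
Import numFieldNormedType.Exports.
Local Open Scope classical_set_scope.
Local Open Scope ring_scope.

Definition good {R : realType} (f : R -> R) : Prop :=
  measurable_fun setT f /\ exists K : R, forall u, `|f u| <= K.

Lemma good_cst {R : realType} (c : R) : good (fun _ => c).
Proof. split; first exact: measurable_cst. by exists `|c|. Qed.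

Lemma good_add {R : realType} (f g : R -> R) : good f -> good g ->
  good (fun u => f u + g u).
Proof.
move=> [mf [K fK]] [mg [M gM]]; split; first exact: measurable_funD.
exists (K + M) => u; apply: le_trans (ler_normD _ _) _; exact: lerD.
Qed.

Lemma good_opp {R : realType} (f : R -> R) : good f -> good (fun u => - f u).
Proof.
move=> [mf [K fK]]; split; first exact: measurableT_comp.
by exists K => u; rewrite normrN.
Qed.

Lemma good_sub {R : realType} (f g : R -> R) : good f -> good g ->
  good (fun u => f u - g u).
Proof. by move=> gf gg; apply: good_add => //; exact: good_opp. Qed.

Lemma good_mul {R : realType} (f g : R -> R) : good f -> good g ->
  good (fun u => f u * g u).
Proof.
move=> [mf [K fK]] [mg [M gM]]; split; first exact: measurable_funM.
exists (K * M) => u; rewrite normrM; apply: ler_pM => //.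
Qed.

Lemma good_mono {R : realType} (f : R -> R) :
  {homo f : x y / x <= y >-> y <= x} -> (forall u, 0 <= f u <= 1) -> good f.
Proof.
move=> fm f01; split; first exact: nonincreasing_measurable.
exists 1 => u; have /andP[f0 f1] := f01 u; by rewrite ger0_norm.
Qed.

Lemma good_integrable {R : realType} {f : R -> R} : good f ->
  (@lebesgue_measure R).-integrable `[0%R, 1%R] (EFin \o f).
Proof.
move=> [mf [K fK]]; apply: measurable_bounded_integrable => //.
- by rewrite /= lebesgue_measure_itv/= lte01 -EFinB ltry.
- exact: measurable_funS mf.
- exists K; split; first exact: num_real.
  by move=> M KM x _; apply: le_trans (fK x) (ltW KM).
Qed.

Lemma mpre {d} {T : measurableType d} {L : nat} (Z : T -> bvec L) :
  (forall z, measurable (Z @^-1` [set z])) -> forall A, measurable (Z @^-1` A).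
Proof.
move=> mZ A.
have -> : Z @^-1` A = \bigcup_(z in A) Z @^-1` [set z].
  apply/seteqP; split => [w Aw | w [z Az /= ->]] //.
  by exists (Z w).
by apply: fin_bigcup_measurable => //; exact: finite_finset.
Qed.

Lemma fine_prob01 {d} {T : measurableType d} {R : realType} (P : probability T R) A :
  measurable A -> 0 <= fine (P A) <= 1.
Proof.
move=> mA; rewrite fine_ge0 //=.
have := probability_le1 P mA.
have : P A \is a fin_num by rewrite fin_num_measure.
by case: (P A) => //= r _; rewrite lee_fin.
Qed.

Lemma good_condPr {R : realType} {d} {T : measurableType d} (P : probability T R)
  {L : nat} (Z : T -> bvec L) (V : bvec L -> R) (B : set (bvec L)) :
  (forall z, measurable (Z @^-1` [set z])) ->
  good (fun u => fine (P ([set w | u <= V (Z w)] `&` Z @^-1` B))).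
Proof.
move=> mZ.
have mS u : measurable ([set w | u <= V (Z w)] `&` Z @^-1` B).
  apply: measurableI; last exact: mpre.
  exact: (mpre Z mZ [set z | u <= V z]).
apply: good_mono.
- move=> x y xy; apply: fine_le; rewrite ?fin_num_measure//.
  apply: le_measure; rewrite ?inE; try exact: mS.
  by move=> w [/= yV Bw]; split => //=; exact: le_trans yV.
- by move=> u; apply: fine_prob01; exact: mS.
Qed.

Lemma good_h {R : realType} {d} {T : measurableType d} (P : probability T R)
  {L : nat} (Z : T -> bvec L) (V : bvec L -> R) l :
  (forall z, measurable (Z @^-1` [set z])) -> good (h_l P Z V l).
Proof.
move=> mZ; rewrite /h_l /condPr /Pr.
apply: good_mul; last exact: good_cst.
apply: good_sub; (apply: good_mul; last exact: good_cst).
- exact: (good_condPr P Z V [set z | z l = true] mZ).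
- exact: (good_condPr P Z V [set z | z l = false] mZ).
Qed.

Lemma good_Fpol {R : realType} (mu : probability (measurableTypeR R) R) :
  good (Fpol mu).
Proof.
apply: good_mono.
- move=> x y xy; rewrite /Fpol; apply: fine_le; rewrite ?fin_num_measure//.
  apply: le_measure; rewrite ?inE//.
  by move=> z /=; rewrite !in_itv/= !andbT => yz; exact: le_trans yz.
- by move=> u; apply: fine_prob01.
Qed.

Lemma good_wP {R : realType} (mu0 mu1 : probability (measurableTypeR R) R) :
  good (wP mu0 mu1).
Proof.
rewrite /wP; apply: good_mul; last exact: good_cst.
by apply: good_sub; exact: good_Fpol.
Qed.

Definition Qf {R : realType} {L : nat} (M : 'M[R]_L) (x : 'cV[R]_L) : R :=
  \sum_(p : 'I_L * 'I_L) x p.1 0 * M p.1 p.2 * x p.2 0.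

Definition Gm {R : realType} {L : nat} (e : 'I_L -> R -> R) : 'M[R]_L :=
  \matrix_(l, k) fine (\int[@lebesgue_measure R]_(u in `[0%R, 1%R]) (e l u * e k u)%:E).

Lemma integral_quad {R : realType} {L : nat} (e : 'I_L -> R -> R)
  (ge : forall l, good (e l)) (x : 'cV[R]_L) :
  (\int[@lebesgue_measure R]_(u in `[0%R, 1%R]) ((\sum_l x l 0 * e l u) ^+ 2)%:E =
  (Qf (Gm e) x)%:E)%E.
Proof.
have gp (p : 'I_L * 'I_L) : good (fun u => e p.1 u * e p.2 u).
  exact: good_mul.
have E u : ((\sum_l x l 0 * e l u) ^+ 2)%:E =
    (\sum_(p : 'I_L * 'I_L) ((x p.1 0 * x p.2 0)%:E * (e p.1 u * e p.2 u)%:E))%E.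
  rewrite expr2 mulr_suml.
  under eq_bigr do rewrite mulr_sumr.
  rewrite pair_big /= -sumEFin; apply: eq_bigr => p _.
  by rewrite -EFinM; congr (_%:E); ring.
under eq_integral => u _ do rewrite E.
rewrite integral_sum //; last first.
  move=> p /=; apply: integrableZl => //; exact: (good_integrable (gp p)).
rewrite /Qf -sumEFin; apply: eq_bigr => p _.
rewrite integralZl //; last exact: (good_integrable (gp p)).
rewrite mxE.
rewrite -[X in (_ * X)%E]fineK; last first.
  by apply: integrable_fin_num => //; exact: (good_integrable (gp p)).
rewrite -EFinM; congr (_%:E); rewrite /=; ring.
Qed.

Lemma Qf_mid {R : realType} {L : nat} (M : 'M[R]_L) (a b : 'cV[R]_L) :
  4 * Qf M ((2 : R)^-1 *: (a + b)) = 2 * Qf M a + 2 * Qf M b - Qf M (a - b).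
Proof.
rewrite /Qf !mulr_sumr -big_split -sumrB; apply: eq_bigr => p _.
rewrite !mxE /=.
have h2 : (2 : R) != 0 by rewrite pnatr_eq0.
by field.
Qed.

Lemma cont_sum {T : topologicalType} {R : realType} {I : Type} (s : seq I)
  (f : I -> T -> R) : (forall i, continuous (f i)) ->
  continuous (fun x => \sum_(i <- s) f i x).
Proof.
move=> cf; elim: s => [|i s IH].
  under eq_fun do rewrite big_nil; exact: cst_continuous.
have -> : (fun x => \sum_(j <- i :: s) f j x) = (fun x => f i x + \sum_(j <- s) f j x).
  by apply: funext => x; rewrite big_cons.
by move=> x; apply: continuousD; [exact: cf | exact: IH].
Qed.

Lemma cont_Qf {R : realType} {L : nat} (M : 'M[R]_L) :
  continuous (fun v : 'rV[R]_L => Qf M v^T).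
Proof.
rewrite /Qf; under eq_fun do under eq_bigr do rewrite !mxE.
apply: cont_sum => p x.
apply: (@continuousM R _ (fun v : 'rV[R]_L => v 0 p.1 * M p.1 p.2) (fun v : 'rV[R]_L => v 0 p.2)).
  apply: (@continuousM R _ (fun v : 'rV[R]_L => v 0 p.1) (fun v : 'rV[R]_L => M p.1 p.2)).
    exact: coord_continuous.
  exact: cst_continuous.
exact: coord_continuous.
Qed.

Lemma arith_uniq {R : realType} (qa qb qm qd : R) : 0 < qd -> 4 * qm = 2 * qa + 2 * qb - qd ->
  qa <= qm -> qa <= qb -> qb <= qa -> False.
Proof. move=> *; lra. Qed.

Lemma opt (R : realType) (L : nat) (G Ga : 'M[R]_L) :
  (0 < L)%N -> (forall x, 0 <= Qf G x) -> (forall x, x != 0 -> 0 < Qf Ga x) ->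
  exists! om : 'cV[R]_L,
    (simplex om /\ forall y, simplex y -> Qf G om <= Qf G y) /\
    forall y, (simplex y /\ forall z, simplex z -> Qf G y <= Qf G z) ->
      Qf Ga om <= Qf Ga y.
Proof.
move=> L0 G0 Gpd.
set S := fun om : 'cV[R]_L => simplex om /\ forall y, simplex y -> Qf G om <= Qf G y.
have Smid a b : S a -> S b -> S ((2:R)^-1 *: (a + b)).
  move=> [[a0 a1] aG] [[b0 b1] bG]; split.
    split.
      move=> i; rewrite !mxE; apply: mulr_ge0; first by rewrite invr_ge0 ler0n.
      exact: addr_ge0 (a0 i) (b0 i).
    under eq_bigr do rewrite !mxE.
    rewrite -mulr_sumr big_split /= a1 b1.
    have h2 : (2 : R) != 0 by rewrite pnatr_eq0.
    by field.
  move=> y sy; have := Qf_mid G a b; have := G0 (a - b).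
  have := aG y sy; have := bG y sy; lra.
pose SR := [set v : 'rV[R]_L | (forall i, 0 <= v 0 i) /\ \sum_i v 0 i = 1].
have SRsimp v : SR v <-> simplex v^T.
  split => -[h1 h2]; split.
  - by move=> i; rewrite mxE.
  - by under eq_bigr do rewrite mxE.
  - by move=> i; have := h1 i; rewrite mxE.
  - by move: h2; under eq_bigr do rewrite mxE.
have SRc : compact SR.
  apply: (@subclosed_compact _ SR [set v : 'rV[R]_L | forall i, `[0%R, 1%R]%classic (v ord0 i)]).
  - have -> : SR = (\bigcap_(i in setT) [set v : 'rV[R]_L | 0 <= v 0 i]) `&`
                   [set v : 'rV[R]_L | \sum_i v 0 i = 1].
      apply/seteqP; split => v.
        by move=> [h1 h2]; split => // i _; exact: h1.
      by move=> [h1 h2]; split => // i; exact: h1 i I.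
    apply: closedI.
      apply: closed_bigI => i _.
      apply: (@preimage_closed _ _ (fun v : 'rV[R]_L => v 0 i) [set x | 0 <= x]).
        by move=> x _; exact: coord_continuous.
      exact: closed_ge.
    apply: (@preimage_closed _ _ (fun v : 'rV[R]_L => \sum_i v 0 i) [set x | x = 1]).
      move=> x _; apply: cont_sum => i; exact: coord_continuous.
    exact: closed_eq.
  - have := (@rV_compact R L (fun=> `[0%R, 1%R]%classic) (fun=> @segment_compact R 0 1)). exact.
  - move=> v [h1 h2] i; rewrite /= in_itv /= h1 /= -h2.
    rewrite (bigD1 i) //= lerDl; apply: sumr_ge0 => j _; exact: h1.
have SR0 : SR !=set0.
  pose i0 := Ordinal L0.
  exists (\row_i (i == i0)%:R); split.
    by move=> i; rewrite mxE ler0n.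
  under eq_bigr do rewrite mxE.
  rewrite (bigD1 i0) //= ?eqxx big1 ?addr0 // => i /negbTE -> //.
have [c cSR cmin] := compact_EVT_min SR0 SRc (continuous_subspaceT (cont_Qf G)).
have cSR' : SR c by move: cSR; rewrite in_setE.
pose S2 := SR `&` [set v | Qf G v^T <= Qf G c^T].
have S2c : compact S2.
  apply: compact_closedI => //.
  apply: (@preimage_closed _ _ (fun v : 'rV[R]_L => Qf G v^T) [set x | x <= Qf G c^T]).
    by move=> x _; exact: cont_Qf.
  exact: closed_le.
have S20 : S2 !=set0 by exists c; split => //=.
have [c2 c2S c2min] := compact_EVT_min S20 S2c (continuous_subspaceT (cont_Qf Ga)).
have cS : S c^T.
  split; first by exact/SRsimp.
  move=> y sy; have := cmin y^T; rewrite trmxK; apply; apply: mem_set.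
  by apply/SRsimp; rewrite trmxK.
have [c2SR c2le] : S2 c2 by move: c2S; rewrite in_setE.
have Sc2 : S c2^T.
  split; first exact/SRsimp.
  move=> y sy; apply: le_trans c2le _; exact: cS.2.
exists c2^T; split.
  split => // y Sy; have := c2min y^T; rewrite trmxK; apply; apply: mem_set; split.
    by apply/SRsimp; rewrite trmxK; exact: Sy.1.
  by rewrite /= trmxK; apply: Sy.2; exact: cS.1.
move=> b [Sb bmin]; set a := c2^T in Sc2 *.
have amin : forall y, S y -> Qf Ga a <= Qf Ga y.
  move=> y Sy; have := c2min y^T; rewrite trmxK; apply; apply: mem_set; split.
    by apply/SRsimp; rewrite trmxK; exact: Sy.1.
  by rewrite /= trmxK; apply: Sy.2; exact: cS.1.
case: (boolP (a == b)) => [/eqP //|ab].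
have abn : a - b != 0 by rewrite GRing.subr_eq0.
have h1 := Gpd (a - b) abn. have h2 := Qf_mid Ga a b.
exfalso; apply: (@arith_uniq R (Qf Ga a) (Qf Ga b) (Qf Ga ((2:R)^-1 *: (a+b))) (Qf Ga (a-b)) h1 h2).
- exact: amin _ (Smid a b Sc2 Sb).
- exact: amin b Sb.
- exact: bmin a Sc2.
Qed.

Lemma quadformE {R : realType} {L : nat} (M : 'M[R]_L) (x : 'cV[R]_L) :
  quadform M x = Qf M x.
Proof.
rewrite /quadform /Qf mxE; under eq_bigr do rewrite mxE big_distrl.
rewrite exchange_big pair_big /=; apply: eq_bigr => p _; rewrite !mxE //.
Qed.

Theorem proposition15 (R : realType) (d : measure_display) (T : measurableType d)
  (P : probability T R) (L : nat) (Z : T -> bvec L) (Dt : T -> ctype L)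
  (Y0 Y1 U : T -> R) (V : bvec L -> R)
  (mu0 mu1 : probability (measurableTypeR R) R) :
  (2 <= L)%N ->
  regular P Z Dt Y0 Y1 ->
  A1 P Z Dt Y0 Y1 -> A2 Dt -> A3 P Z Dt ->
  LI P Dt Y0 Y1 U V ->
  posdef (GammaWald P Z Dt Y0 Y1) ->
  policy_ok mu0 mu1 ->
  let S := argmin_on (@simplex R L) (fit_obj (hbar P Z V) (wP mu0 mu1)) in
  exists! om : 'cV[R]_L,
    argmin_on S (fun x => (quadform (GammaWald P Z Dt Y0 Y1) x)%:E) om.
Proof.
move=> L2 reg _ _ _ _ Gpd _ S.
have mZ := reg.2.2.1.
pose e := fun l u => h_l P Z V l u - wP mu0 mu1 u.
have ge l : good (e l) := good_sub _ _ (good_h P Z V l mZ) (good_wP mu0 mu1).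
pose G := Gm e.
have fitE om : simplex om -> fit_obj (hbar P Z V) (wP mu0 mu1) om = (Qf G om)%:E.
  move=> [_ om1]; rewrite /fit_obj -integral_quad //; apply: eq_integral => u _.
  congr ((_ ^+ 2)%:E); rewrite /hbar /e.
  under [RHS]eq_bigr do rewrite mulrBr.
  by rewrite sumrB -mulr_suml om1 mul1r.
have G0 x : 0 <= Qf G x.
  rewrite -lee_fin -integral_quad //; apply: integral_ge0 => u _.
  by rewrite lee_fin; exact: sqr_ge0.
set Ga := GammaWald P Z Dt Y0 Y1 in Gpd *.
have Gapd x : x != 0 -> 0 < Qf Ga x by rewrite -quadformE; exact: Gpd.
have L0 : (0 < L)%N by exact: leq_trans L2.
have [om [[Som minom] uniq]] := @opt R L G Ga L0 G0 Gapd.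
exists om; split.
  split.
    split; first exact: Som.1.
    by move=> y sy; rewrite !fitE // ?lee_fin; [exact: Som.2 | exact: Som.1].
  move=> y [sy ymin]; rewrite lee_fin !quadformE; apply: minom; split => //.
  move=> z sz; have := ymin z sz; rewrite !fitE //.
move=> y [[sy ymin] ymin2]; apply: uniq; split.
  split => // z sz; have := ymin z sz; rewrite !fitE //.
move=> z [sz zmin]; have := ymin2 z; rewrite lee_fin !quadformE; apply; split => //.
by move=> w sw; rewrite !fitE // lee_fin; exact: zmin.
Qed.
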